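(* Let $A$ be any algebra (over a field of characteristic $0$) that is alternative and satisfies $a(bc)=b(ac)$ for all $a,b,c$. Then for all $a,b,c,d,e\in A$: \[ ((ba)c)d=((ac)b)d,\qquad (((ab)c)d)e=(((ac)b)d)e,\qquad (((ab)c)d)e=(((ab)d)c)e. \]
   Context: An algebra is alternative if $(x,x,y)=0=(x,y,y)$ for all $x,y$, where $(x,y,z)=(xy)z-x(yz)$. This variety is the Koszul dual of the variety of left-symmetric algebras satisfying $(ab)c+(ba)c+(ac)b+(ca)b+(bc)a+(cb)a=0$. *)

(* Defs.v *)
From mathcomp Require Import all_boot all_order all_algebra.
Set Implicit Arguments. Unset Strict Implicit. Unset Printing Implicit Defensive.
Import GRing.Theory.
Local Open Scope ring_scope.

Definition bilinear_mul (K : fieldType) (V : lmodType K) (mul : V -> V -> V) : Prop :=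
  (forall (k : K) (x y z : V), mul (k *: x + y) z = k *: mul x z + mul y z) /\
  (forall (k : K) (x y z : V), mul x (k *: y + z) = k *: mul x y + mul x z).

Definition assoc (K : fieldType) (V : lmodType K) (mul : V -> V -> V) (x y z : V) : V :=
  mul (mul x y) z - mul x (mul y z).

Definition alternative (K : fieldType) (V : lmodType K) (mul : V -> V -> V) : Prop :=
  forall x y : V, assoc mul x x y = 0 /\ assoc mul x y y = 0.

Definition char0 (K : fieldType) : Prop := [pchar K] =i pred0.

(* Main.v *)
Require Import Defs.
From mathcomp Require Import all_boot all_order all_algebra.
Set Implicit Arguments. Unset Strict Implicit. Unset Printing Implicit Defensive.
Import GRing.Theory.
Local Open Scope ring_scope.

Inductive tr := Lf of nat | Nd of tr & tr.
Fixpoint tr_eqb (s t : tr) : bool :=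
  match s, t with
  | Lf n, Lf m => (n == m)%N
  | Nd s1 s2, Nd t1 t2 => tr_eqb s1 t1 && tr_eqb s2 t2
  | _, _ => false
  end.
Lemma tr_eqbP s t : tr_eqb s t -> s = t.
Proof.
elim: s t => [n|s1 IH1 s2 IH2] [m|t1 t2] //=.
  by move/eqP => ->.
by case/andP => /IH1 -> /IH2 ->.
Qed.

Inductive tm := TV of nat | TA of tm & tm | TO of tm | T0 | TM of tm & tm | TZ of tm & int.

Definition nf := seq (tr * int).

Fixpoint norm (t : tm) : nf :=
  match t with
  | TV n => [:: (Lf n, 1)]
  | TA a b => norm a ++ norm b
  | TO a => [seq (p.1, - p.2) | p <- norm a]
  | T0 => [::]
  | TM a b => [seq (Nd pq.1.1 pq.2.1, pq.1.2 * pq.2.2) | pq <- [seq (p, q) | p <- norm a, q <- norm b]]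
  | TZ a z => [seq (p.1, p.2 * z) | p <- norm a]
  end.

Fixpoint coef (t : tr) (l : nf) : int :=
  match l with
  | [::] => 0
  | p :: l' => (if tr_eqb t p.1 then p.2 else 0) + coef t l'
  end.

Fixpoint chk (fuel : nat) (l : nf) : bool :=
  match l with
  | [::] => true
  | p :: l' => match fuel with
    | 0 => false
    | S f => (p.2 + coef p.1 l' == 0) && chk f (filter (fun q => ~~ tr_eqb p.1 q.1) l')
    end
  end.

Definition check2 (a b : tm) := let l := norm (TA a (TO b)) in chk (size l) l.



Lemma mDl (K : fieldType) (V : lmodType K) (mul : V -> V -> V) :
  bilinear_mul mul -> forall x y z, mul (x + y) z = mul x z + mul y z.
Proof. rewrite /bilinear_mul => -[Hl _] x y z; by have := Hl 1 x y z; rewrite !scale1r. Qed.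
Lemma mDr (K : fieldType) (V : lmodType K) (mul : V -> V -> V) :
  bilinear_mul mul -> forall x y z, mul x (y + z) = mul x y + mul x z.
Proof. rewrite /bilinear_mul => -[_ Hr] x y z; by have := Hr 1 x y z; rewrite !scale1r. Qed.
Lemma m0l (K : fieldType) (V : lmodType K) (mul : V -> V -> V) :
  bilinear_mul mul -> forall y, mul 0 y = 0.
Proof.
move=> Hb y; apply: (addrI (mul 0 y)); by rewrite addr0 -mDl // addr0.
Qed.
Lemma m0r (K : fieldType) (V : lmodType K) (mul : V -> V -> V) :
  bilinear_mul mul -> forall y, mul y 0 = 0.
Proof.
move=> Hb y; apply: (addrI (mul y 0)); by rewrite addr0 -mDr // addr0.
Qed.
Lemma mNl (K : fieldType) (V : lmodType K) (mul : V -> V -> V) :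
  bilinear_mul mul -> forall x y, mul (- x) y = - mul x y.
Proof.
move=> Hb x y; apply/eqP; rewrite -addr_eq0 -mDl // addNr m0l //.
Qed.
Lemma mNr (K : fieldType) (V : lmodType K) (mul : V -> V -> V) :
  bilinear_mul mul -> forall x y, mul x (- y) = - mul x y.
Proof.
move=> Hb x y; apply/eqP; rewrite -addr_eq0 -mDr // addNr m0r //.
Qed.
Lemma mZl (K : fieldType) (V : lmodType K) (mul : V -> V -> V) :
  bilinear_mul mul -> forall x y z, mul (x *~ z) y = mul x y *~ z.
Proof.
move=> Hb x y [] n.
  rewrite -!pmulrn; elim: n => [|n IH]; first by rewrite !mulr0n m0l.
  by rewrite !mulrS mDl // IH.
rewrite !NegzE !mulrNz mNl // -!pmulrn; congr (- _).
elim: n => [|n IH]; first by rewrite !mulr1n.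
by rewrite (mulrS x) (mulrS (mul x y)) mDl // IH.
Qed.
Lemma mZr (K : fieldType) (V : lmodType K) (mul : V -> V -> V) :
  bilinear_mul mul -> forall x y z, mul x (y *~ z) = mul x y *~ z.
Proof.
move=> Hb x y [] n.
  rewrite -!pmulrn; elim: n => [|n IH]; first by rewrite !mulr0n m0r.
  by rewrite !mulrS mDr // IH.
rewrite !NegzE !mulrNz mNr // -!pmulrn; congr (- _).
elim: n => [|n IH]; first by rewrite !mulr1n.
by rewrite (mulrS y) (mulrS (mul x y)) mDr // IH.
Qed.

Fixpoint evt (K : fieldType) (V : lmodType K) (mul : V -> V -> V) (env : seq V) (t : tr) : V :=
  match t with
  | Lf n => nth 0 env n
  | Nd a b => mul (evt mul env a) (evt mul env b)
  end.
Fixpoint evm (K : fieldType) (V : lmodType K) (mul : V -> V -> V) (env : seq V) (t : tm) : V :=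
  match t with
  | TV n => nth 0 env n
  | TA a b => evm mul env a + evm mul env b
  | TO a => - evm mul env a
  | T0 => 0
  | TM a b => mul (evm mul env a) (evm mul env b)
  | TZ a z => evm mul env a *~ z
  end.
Definition evn (K : fieldType) (V : lmodType K) (mul : V -> V -> V) (env : seq V) (l : nf) : V :=
  \sum_(p <- l) evt mul env p.1 *~ p.2.

Lemma msuml (K : fieldType) (V : lmodType K) (mul : V -> V -> V) :
  bilinear_mul mul -> forall (I : Type) (r : seq I) (F : I -> V) y,
  mul (\sum_(i <- r) F i) y = \sum_(i <- r) mul (F i) y.
Proof.
move=> Hb I r F y; elim: r => [|i r IH]; first by rewrite !big_nil m0l.
by rewrite !big_cons mDl // IH.
Qed.
Lemma msumr (K : fieldType) (V : lmodType K) (mul : V -> V -> V) :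
  bilinear_mul mul -> forall (I : Type) (r : seq I) (F : I -> V) y,
  mul y (\sum_(i <- r) F i) = \sum_(i <- r) mul y (F i).
Proof.
move=> Hb I r F y; elim: r => [|i r IH]; first by rewrite !big_nil m0r.
by rewrite !big_cons mDr // IH.
Qed.

Lemma norm_ok (K : fieldType) (V : lmodType K) (mul : V -> V -> V) (env : seq V) :
  bilinear_mul mul -> forall t, evm mul env t = evn mul env (norm t).
Proof.
move=> Hb; elim=> [n|a IHa b IHb|a IHa||a IHa b IHb|a IHa z] /=.
- by rewrite /evn big_seq1 mulr1z.
- by rewrite IHa IHb /evn big_cat.
- by rewrite IHa /evn big_map -sumrN; apply: eq_bigr => p _; rewrite mulrNz.
- by rewrite /evn big_nil.
- rewrite IHa IHb /evn big_map big_allpairs msuml //; apply: eq_bigr => p _.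
  rewrite msumr //; apply: eq_bigr => q _ /=.
  by rewrite mZl // mZr // mulrzA mulrzAC.
- rewrite IHa /evn big_map mulrz_suml; apply: eq_bigr => p _ /=.
  by rewrite mulrzA.
Qed.

Lemma coef_split (K : fieldType) (V : lmodType K) (mul : V -> V -> V) (env : seq V) t l :
  evn mul env l = evt mul env t *~ coef t l + evn mul env (filter (fun q => ~~ tr_eqb t q.1) l).
Proof.
rewrite /evn; elim: l => [|p l IH] /=; first by rewrite !big_nil mulr0z addr0.
case E: (tr_eqb t p.1) => /=.
  by rewrite big_cons IH mulrzDr addrA (tr_eqbP E).
by rewrite !big_cons IH add0r addrCA.
Qed.

Lemma chk_ok (K : fieldType) (V : lmodType K) (mul : V -> V -> V) (env : seq V) f l :
  chk f l -> evn mul env l = 0.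
Proof.
elim: f l => [|f IH] [|p l] //=; try by rewrite /evn big_nil.
case/andP => /eqP H1 H2.
have E := coef_split mul env p.1 l; rewrite (IH _ H2) addr0 in E.
by rewrite /evn big_cons -/(evn mul env l) E -mulrzDr H1 mulr0z.
Qed.

Lemma check2_ok (K : fieldType) (V : lmodType K) (mul : V -> V -> V) (env : seq V) a b :
  bilinear_mul mul -> check2 a b = true -> evm mul env a = evm mul env b.
Proof.
move=> Hb H; apply/eqP; rewrite -subr_eq0.
have := norm_ok env Hb (TA a (TO b)) => /= ->.
by apply/eqP; apply: (chk_ok _ _ H).
Qed.

Ltac lookup t vs :=
  lazymatch vs with
  | (t :: _) => constr:(0%N)
  | (_ :: ?tl) => let n := lookup t tl in constr:(S n)
  end.

Ltac reify mul vs t :=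
  lazymatch t with
  | mul ?x ?y => let rx := reify mul vs x in let ry := reify mul vs y in constr:(TM rx ry)
  | (?x + ?y)%R => let rx := reify mul vs x in let ry := reify mul vs y in constr:(TA rx ry)
  | (- ?x)%R => let rx := reify mul vs x in constr:(TO rx)
  | 0%R => constr:(T0)
  | (?x *~ ?z)%R => let rx := reify mul vs x in constr:(TZ rx z)
  | _ => let n := lookup t vs in constr:(TV n)
  end.

Ltac zsolve mul vs Hb :=
  lazymatch goal with
  | |- ?L = ?R =>
    let l := reify mul vs L in let r := reify mul vs R in
    change (evm mul vs l = evm mul vs r);
    apply: (check2_ok vs Hb); vm_compute; reflexivity
  end.


Definition I1 (K : fieldType) (V : lmodType K) (mul : V -> V -> V) (x y z : V) :=
  assoc mul x y z + assoc mul y x z.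
Definition I2 (K : fieldType) (V : lmodType K) (mul : V -> V -> V) (x y z : V) :=
  assoc mul x y z + assoc mul x z y.
Definition ILC (K : fieldType) (V : lmodType K) (mul : V -> V -> V) (x y z : V) :=
  mul x (mul y z) - mul y (mul x z).
Definition IL4 (K : fieldType) (V : lmodType K) (mul : V -> V -> V) (x y z w : V) :=
  mul (mul x (mul y z)) w - mul (mul x (mul z y)) w.

Lemma I1_0 (K : fieldType) (V : lmodType K) (mul : V -> V -> V) :
  bilinear_mul mul -> alternative mul -> forall x y z, I1 mul x y z = 0.
Proof.
move=> Hb Ha x y z.
have E : I1 mul x y z = assoc mul (x + y) (x + y) z - assoc mul x x z - assoc mul y y z.
  rewrite /I1 /assoc; zsolve mul [:: x; y; z] Hb.
by rewrite E (Ha (x + y) z).1 (Ha x z).1 (Ha y z).1 !subr0.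
Qed.

Lemma I2_0 (K : fieldType) (V : lmodType K) (mul : V -> V -> V) :
  bilinear_mul mul -> alternative mul -> forall x y z, I2 mul x y z = 0.
Proof.
move=> Hb Ha x y z.
have E : I2 mul x y z = assoc mul x (y + z) (y + z) - assoc mul x y y - assoc mul x z z.
  rewrite /I2 /assoc; zsolve mul [:: x; y; z] Hb.
by rewrite E (Ha x (y + z)).2 (Ha x y).2 (Ha x z).2 !subr0.
Qed.

Lemma zcancel (K : fieldType) (V : lmodType K) :
  char0 K -> forall (x : V) (N : nat), (0 < N)%N -> x *~ Posz N = 0 -> x = 0.
Proof.
move=> Hc x N HN H.
have HN' : (N%:R : K) != 0 by rewrite (pcharf0P K).1 // -lt0n.
have : (N%:R : K) *: x = 0 by rewrite scaler_nat; exact: H.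
move/(congr1 (fun v => (N%:R : K)^-1 *: v)).
by rewrite scalerA mulVf // scale1r scaler0.
Qed.

Lemma ILC_0 (K : fieldType) (V : lmodType K) (mul : V -> V -> V) :
  (forall a b c : V, mul a (mul b c) = mul b (mul a c)) -> forall x y z, ILC mul x y z = 0.
Proof. by move=> H x y z; rewrite /ILC H subrr. Qed.

Lemma IL4_0 (K : fieldType) (V : lmodType K) (mul : V -> V -> V) :
  char0 K -> bilinear_mul mul -> alternative mul ->
  (forall a b c : V, mul a (mul b c) = mul b (mul a c)) ->
  forall a b c d, IL4 mul a b c d = 0.
Proof.
move=> Hc Hb Ha Hlc a b c d; rewrite /IL4.
  apply: (zcancel Hc (N := 3)) => //.
  have -> : ((mul (mul a (mul b c)) d) - (mul (mul a (mul c b)) d)) *~ (Posz 3) = (I2 mul a (mul c b) d) *~ (Negz 3) + (ILC mul c (mul a d) b) *~ (Negz 3) + (ILC mul a (mul c b) d) *~ (Negz 2) + (ILC mul a (mul b c) d) *~ (Posz 3) + (I1 mul b c (mul a d)) *~ (Negz 1) + (mul (ILC mul b c a) d) *~ (Posz 3) + (mul (I1 mul b c a) d) *~ (Negz 0) + (I1 mul a (mul b c) d) *~ (Negz 0) + (I1 mul a (mul c b) d) *~ (Posz 1) + (mul (ILC mul a c b) d) *~ (Posz 2) + (mul (I1 mul a c b) d) *~ (Posz 2) + (I1 mul b (mul a c) d) *~ (Negz 1) + (I1 mul b (mul c a) d) *~ (Negz 1) + (mul (I2 mul b a c) d) *~ (Posz 2) + (I1 mul (mul b a) c d) *~ (Posz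 2) + (ILC mul (mul b a) c d) *~ (Negz 1) + (ILC mul b (mul c a) d) *~ (Negz 1) + (ILC mul b (mul a c) d) *~ (Posz 2) + (ILC mul a d (mul c b)) *~ (Negz 3) + (mul (I1 mul a b d) c) *~ (Posz 4) + (I2 mul (mul a b) c d) *~ (Negz 3) + (I1 mul (mul a b) c d) *~ (Posz 4) + (I2 mul (mul b a) c d) *~ (Negz 3) + (I2 mul a c (mul b d)) *~ (Posz 4) + (ILC mul (mul a b) d c) *~ (Negz 3) + (I2 mul b c (mul a d)) *~ (Posz 4) + (ILC mul (mul b a) d c) *~ (Negz 3) + (I2 mul a (mul b c) d) *~ (Posz 4) + (ILC mul b (mul a d) c) *~ (Posz 4) + (I2 mul b (mul a c) d) *~ (Posz 4) + (ILC mul a (mul b d) c) *~ (Posz 4) + (I1 mul a c (mul b d)) *~ (Negz 3) + (ILC mul a d (mul b c)) *~ (Posz 4) + (ILC mul b c (mul a d)) *~ (Posz 2) + (ILC mul b d (mul a c)) *~ (Posz 4) + (mul c (I2 mul a b d)) *~ (Posz 4) + (ILC mul (mul c a) d b) *~ (Posz 2) + (ILC mul (mul a c) d b) *~ (Posz 2) + (I1 mul a c (mul d b)) *~ (Negz 1) + (ILC mul a c (mul d b)) *~ (Negz 1) + (mul d (I1 mul a b c)) *~ (Negz 3) + (mul d (I1 mul a c b)) *~ (Posz 2) + (mul d (ILC mul a c b)) *~ (Negz 1).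
    rewrite /I1 /I2 /ILC /IL4 /assoc; zsolve mul [:: a; b; c; d] Hb.
  by rewrite !(I1_0 Hb Ha) ?(I2_0 Hb Ha) ?(ILC_0 Hlc) ?(m0l Hb) ?(m0r Hb) ?mul0rz ?addr0.
Qed.

Theorem mainTheorem16 (K : fieldType) (V : lmodType K) (mul : V -> V -> V) :
  char0 K ->
  bilinear_mul mul ->
  alternative mul ->
  (forall a b c : V, mul a (mul b c) = mul b (mul a c)) ->
  forall a b c d e : V,
    mul (mul (mul b a) c) d = mul (mul (mul a c) b) d /\
    mul (mul (mul (mul a b) c) d) e = mul (mul (mul (mul a c) b) d) e /\
    mul (mul (mul (mul a b) c) d) e = mul (mul (mul (mul a b) d) c) e.
Proof.
move=> Hc Hb Ha Hlc a b c d e.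
split; [|split]; apply/eqP; rewrite -subr_eq0; apply/eqP.
- apply: (zcancel Hc (N := 1)) => //.
  have -> : ((mul (mul (mul b a) c) d) - (mul (mul (mul a c) b) d)) *~ (Posz 1) = (mul (I1 mul a c b) d) *~ (Negz 0) + (mul (I2 mul b a c) d) *~ (Posz 1) + (mul (I1 mul b c a) d) *~ (Negz 0) + (mul (I2 mul c a b) d) *~ (Posz 1) + (mul (ILC mul a b c) d) *~ (Negz 0) + (IL4 mul a b c d) *~ (Posz 1).
    rewrite /I1 /I2 /ILC /IL4 /assoc; zsolve mul [:: a; b; c; d] Hb.
  by rewrite !(I1_0 Hb Ha) ?(I2_0 Hb Ha) ?(ILC_0 Hlc) ?(IL4_0 Hc Hb Ha Hlc) ?(m0l Hb) ?(m0r Hb) ?mul0rz ?addr0.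
- apply: (zcancel Hc (N := 24)) => //.
  have -> : ((mul (mul (mul (mul a b) c) d) e) - (mul (mul (mul (mul a c) b) d) e)) *~ (Posz 24) = (I1 mul (mul (mul a c) b) d e) *~ (Negz 5) + (ILC mul b (mul a c) (mul d e)) *~ (Negz 0) + (ILC mul (mul b (mul a c)) d e) *~ (Posz 4) + (I1 mul b (mul a c) (mul d e)) *~ (Negz 0) + (ILC mul (mul (mul a b) c) d e) *~ (Negz 1) + (I2 mul d (mul (mul a c) b) e) *~ (Posz 4) + (I1 mul d e (mul (mul a c) b)) *~ (Negz 1) + (I2 mul d (mul (mul a b) c) e) *~ (Negz 3) + (I1 mul (mul (mul a b) c) d e) *~ (Posz 6) + (I1 mul d e (mul (mul a b) c)) *~ (Posz 2) + (ILC mul (mul (mul a b) c) e d) *~ (Negz 0) + (ILC mul (mul a b) c (mul e d)) *~ (Posz 1) + (ILC mul (mul a b) c (mul d e)) *~ (Negz 0) + (ILC mul (mul a b) (mul e d) c) *~ (Posz 2) + (ILC mul (mul a b) (mul d e) c) *~ (Negz 1) + (I2 mul (mul a b) c (mul e d)) *~ (Posz 2) + (I2 mul (mul a b) c (mul d e)) *~ (Negz 1) + (IL4 mul (mul a b) d e c) *~ (Posz 2) + (ILC mul (mul b (mul a c)) e d) *~ (Negz 0) + (ILC mul (mul a c) (mul e d) b) *~ (Negz 1) + (ILC mul (mul a c) (mul d e) b) *~ (Posz 2) + (I2 mul (mul a c) b (mul e d)) *~ (Negz 1) + (I2 mul (mul a c) b (mul d e)) *~ (Posz 2) + (IL4 mul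 (mul a c) d e b) *~ (Negz 1) + (I1 mul b (mul a c) (mul e d)) *~ (Posz 1) + (ILC mul (mul (mul a c) b) d e) *~ (Posz 2) + (ILC mul (mul (mul a c) b) e d) *~ (Posz 1) + (ILC mul b (mul a c) (mul e d)) *~ (Posz 1) + (ILC mul (mul c (mul a b)) d e) *~ (Negz 3) + (I1 mul (mul a b) c (mul d e)) *~ (Posz 1) + (ILC mul (mul c (mul a b)) e d) *~ (Posz 1) + (I1 mul (mul a b) c (mul e d)) *~ (Negz 0) + (I2 mul (mul c (mul a b)) d e) *~ (Posz 1) + (I1 mul (mul c (mul a b)) d e) *~ (Posz 4) + (I1 mul (mul c (mul a b)) e d) *~ (Negz 0) + (I2 mul (mul (mul a b) c) d e) *~ (Negz 0) + (I1 mul (mul (mul a b) c) e d) *~ (Posz 1) + (IL4 mul d (mul a b) c e) *~ (Negz 5) + (IL4 mul e (mul a b) c d) *~ (Negz 0) + (I2 mul (mul (mul a c) b) d e) *~ (Posz 1) + (I1 mul (mul (mul a c) b) e d) *~ (Negz 0) + (IL4 mul d b (mul a c) e) *~ (Negz 5) + (I2 mul (mul b (mul a c)) d e) *~ (Negz 0) + (I1 mul (mul b (mul a c)) d e) *~ (Negz 3) + (I1 mul (mul b (mul a c)) e d) *~ (Posz 1) + (IL4 mul e b (mul a c) d) *~ (Negz 0) + (mul (I1 mul a c b) (mul d e)) *~ (Negz 7) + (ILC mul (mul (mul c a) b) d e) *~ (Posz 4) + (mul (I1 mul a b c) (mul d e)) *~ (Posz 8) + (ILC mul (mul (mul b a)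 c) d e) *~ (Negz 3) + (IL4 mul a b c (mul d e)) *~ (Posz 8) + (mul (ILC mul (mul b a) c d) e) *~ (Negz 3) + (mul (I2 mul (mul b a) c d) e) *~ (Negz 3) + (I1 mul (mul (mul b a) c) d e) *~ (Posz 4) + (mul (I1 mul d (mul b a) c) e) *~ (Posz 4) + (mul (I2 mul d (mul a b) c) e) *~ (Posz 15) + (mul (IL4 mul d a b c) e) *~ (Posz 4) + (mul (ILC mul a (mul d c) b) e) *~ (Posz 10) + (IL4 mul a b (mul d c) e) *~ (Posz 5) + (mul (ILC mul a (mul c d) b) e) *~ (Negz 9) + (IL4 mul a b (mul c d) e) *~ (Negz 4) + (mul (I2 mul a b (mul d c)) e) *~ (Posz 5) + (mul (I2 mul a b (mul c d)) e) *~ (Negz 4) + (mul (IL4 mul a c d b) e) *~ (Posz 5) + (IL4 mul (mul a b) c d e) *~ (Posz 5) + (mul (I2 mul c (mul b a) d) e) *~ (Posz 2) + (mul (IL4 mul c a b d) e) *~ (Posz 2) + (IL4 mul (mul c d) a b e) *~ (Posz 2) + (mul (I1 mul d c (mul a b)) e) *~ (Negz 4) + (mul (I2 mul c (mul a b) d) e) *~ (Negz 6) + (IL4 mul c (mul a b) d e) *~ (Posz 12) + (IL4 mul c (mul b a) d e) *~ (Negz 1) + (mul (ILC mul b (mul c a) d) e) *~ (Negz 3) + (mul (I2 mul (mul c a) b d) e) *~ (Posz 4) + (I1 mul (mul (mul c a) b) d e) *~ (Negz 3) + (mul (I1 mul d (mul c a) b) e) *~ (Negz 3) + (mul (I2 mul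 d b (mul a c)) e) *~ (Negz 14) + (mul (IL4 mul d a c b) e) *~ (Negz 3) + (mul (I2 mul b (mul a c) d) e) *~ (Posz 7) + (mul (I1 mul d b (mul a c)) e) *~ (Posz 5) + (IL4 mul b (mul a c) d e) *~ (Negz 11) + (IL4 mul b (mul c a) d e) *~ (Posz 2) + (mul (I2 mul b (mul c a) d) e) *~ (Negz 1) + (mul (IL4 mul b a c d) e) *~ (Negz 1) + (IL4 mul (mul b d) a c e) *~ (Negz 1) + (mul (ILC mul a (mul d b) c) e) *~ (Negz 9) + (IL4 mul a c (mul d b) e) *~ (Negz 4) + (mul (ILC mul a (mul b d) c) e) *~ (Posz 10) + (IL4 mul a c (mul b d) e) *~ (Posz 5) + (mul (I2 mul a c (mul d b)) e) *~ (Negz 4) + (mul (I2 mul a c (mul b d)) e) *~ (Posz 5) + (mul (IL4 mul a b d c) e) *~ (Negz 4) + (IL4 mul (mul a c) b d e) *~ (Negz 4) + (ILC mul d e (mul (mul a b) c)) *~ (Negz 1) + (ILC mul d e (mul (mul a c) b)) *~ (Posz 2) + (mul (ILC mul (mul a b) c d) e) *~ (Posz 19) + (mul (I2 mul (mul a b) c d) e) *~ (Posz 19) + (mul (I1 mul d (mul a b) c) e) *~ (Negz 18) + (mul (ILC mul b (mul a c) d) e) *~ (Posz 19) + (mul (I2 mul (mul a c) b d) e) *~ (Negz 18) + (mul (I1 mul d (mul a c) b) e) *~ (Posz 19).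
    rewrite /I1 /I2 /ILC /IL4 /assoc; zsolve mul [:: a; b; c; d; e] Hb.
  by rewrite !(I1_0 Hb Ha) ?(I2_0 Hb Ha) ?(ILC_0 Hlc) ?(IL4_0 Hc Hb Ha Hlc) ?(m0l Hb) ?(m0r Hb) ?mul0rz ?addr0.
- apply: (zcancel Hc (N := 6)) => //.
  have -> : ((mul (mul (mul (mul a b) c) d) e) - (mul (mul (mul (mul a b) d) c) e)) *~ (Posz 6) = (I1 mul c (mul (mul a b) d) e) *~ (Posz 4) + (I2 mul c (mul (mul a b) d) e) *~ (Negz 7) + (I1 mul c e (mul (mul a b) d)) *~ (Posz 4) + (I2 mul d (mul (mul a b) c) e) *~ (Posz 8) + (I1 mul (mul (mul a b) c) d e) *~ (Negz 3) + (I1 mul d e (mul (mul a b) c)) *~ (Negz 3) + (ILC mul (mul (mul a b) d) e c) *~ (Negz 1) + (ILC mul (mul a b) d (mul e c)) *~ (Posz 2) + (ILC mul (mul a b) d (mul c e)) *~ (Negz 1) + (ILC mul (mul a b) (mul e c) d) *~ (Posz 4) + (ILC mul (mul a b) (mul c e) d) *~ (Negz 3) + (I2 mul (mul a b) d (mul e c)) *~ (Posz 4) + (I2 mul (mul a b) d (mul c e)) *~ (Negz 3) + (IL4 mul (mul a b) c e d) *~ (Posz 4) + (ILC mul (mul (mul a b) c) e d) *~ (Posz 2) + (ILC mul (mul a b) c (mul e d)) *~ (Negz 1) + (ILC mul (mul a b) c (mul d e)) *~ (Posz 2) + (ILC mul (mul a b) (mul e d) c) *~ (Negz 3) + (ILC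 mul (mul a b) (mul d e) c) *~ (Posz 4) + (I2 mul (mul a b) c (mul e d)) *~ (Negz 3) + (I2 mul (mul a b) c (mul d e)) *~ (Posz 4) + (IL4 mul (mul a b) d e c) *~ (Negz 3) + (mul (I2 mul (mul a b) c d) e) *~ (Posz 8) + (IL4 mul (mul a b) c d e) *~ (Posz 11) + (mul (I1 mul d (mul a b) c) e) *~ (Negz 15) + (I1 mul (mul a b) d (mul c e)) *~ (Posz 2) + (I2 mul (mul d (mul a b)) c e) *~ (Posz 2) + (I1 mul (mul d (mul a b)) e c) *~ (Negz 1) + (I2 mul (mul (mul a b) d) c e) *~ (Negz 1) + (I1 mul (mul (mul a b) d) e c) *~ (Posz 2) + (IL4 mul e (mul a b) d c) *~ (Negz 1) + (mul (ILC mul a (mul d c) b) e) *~ (Posz 6) + (mul (I2 mul c (mul a b) d) e) *~ (Posz 2) + (I2 mul (mul c (mul a b)) d e) *~ (Negz 1) + (I1 mul (mul c (mul a b)) e d) *~ (Posz 2) + (mul (I1 mul d c (mul a b)) e) *~ (Negz 7) + (IL4 mul a b (mul d c) e) *~ (Posz 3) + (mul (ILC mul a (mul c d) b) e) *~ (Negz 5) + (IL4 mul a b (mul c d) e) *~ (Negz 2) + (mul (I2 mul a b (mul d c)) e) *~ (Posz 3) + (mul (I2 mul a b (mul c d)) e) *~ (Negz 2) + (mul (IL4 mul a c d b) e) *~ (Posz 3) + (IL4 mul c (mul a b) d e) *~ (Posz 6) + (I1 mul (mul a b) c (mul d e)) *~ (Negz 1) + (ILC mul (mul (mul a b) c) d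 e) *~ (Negz 3) + (I2 mul (mul (mul a b) c) d e) *~ (Posz 2) + (I1 mul (mul (mul a b) c) e d) *~ (Negz 1) + (IL4 mul d (mul a b) c e) *~ (Negz 5) + (IL4 mul e (mul a b) c d) *~ (Posz 2) + (ILC mul c (mul (mul a b) d) e) *~ (Negz 3) + (ILC mul (mul c (mul a b)) e d) *~ (Negz 1) + (I1 mul (mul a b) c (mul e d)) *~ (Posz 2) + (ILC mul c e (mul (mul a b) d)) *~ (Negz 3) + (mul (I2 mul d (mul a b) c) e) *~ (Posz 14) + (ILC mul (mul d (mul a b)) e c) *~ (Posz 2) + (I1 mul (mul a b) d (mul e c)) *~ (Negz 1) + (ILC mul d e (mul (mul a b) c)) *~ (Posz 4).
    rewrite /I1 /I2 /ILC /IL4 /assoc; zsolve mul [:: a; b; c; d; e] Hb.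
  by rewrite !(I1_0 Hb Ha) ?(I2_0 Hb Ha) ?(ILC_0 Hlc) ?(IL4_0 Hc Hb Ha Hlc) ?(m0l Hb) ?(m0r Hb) ?mul0rz ?addr0.
Qed.
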